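(* Let $G$ be a graph with chromatic number $\chi(G)$, and suppose $G$ has a proper coloring with $\chi(G)$ color classes $V_1,\ldots,V_{\chi(G)}$, where $V_i=\{v_{i,1},v_{i,2},\ldots,v_{i,n(i)}\}$, such that for each vertex $v_{i,j}$ there is a subset $X_{i,j}\subseteq V(G)\setminus V_i$ with $N_G(v_{i,j})\subseteq X_{i,j}$, satisfying: (i) for each $i$ there is $k(i)\in\{1,\ldots,n(i)\}$ with $X_{i,1}\supseteq X_{i,2}\supseteq\cdots\supseteq X_{i,k(i)}$ and $X_{i,k(i)+1}\subseteq X_{i,k(i)+2}\subseteq\cdots\subseteq X_{i,n(i)}$ (when $k(i)=n(i)$ only the first chain is required); (ii) for any two distinct nonadjacent vertices $v_{i,s}$ and $v_{j,t}$ of $G$, either $v_{i,s}\notin X_{j,t}$ or $v_{j,t}\notin X_{i,s}$. Then $\operatorname{box}(G)\le\chi(G)$.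
   Context: All graphs are finite, simple and undirected. $N_G(v)$ is the set of neighbors of $v$ in $G$. A box in $\mathbb{R}^k$ is a Cartesian product of $k$ closed intervals of the real line. The boxicity $\operatorname{box}(G)$ of a graph $G$ is the minimum nonnegative integer $k$ such that $G$ is isomorphic to the intersection graph of a family of boxes in $\mathbb{R}^k$. $\chi(G)$ is the chromatic number of $G$; a proper coloring with $k$ colors partitions $V(G)$ into $k$ independent sets called color classes. *)

(* Defs.v *)
From mathcomp Require Import all_boot.
From Stdlib Require Import Reals.
Set Implicit Arguments. Unset Strict Implicit. Unset Printing Implicit Defensive.

Definition simple_graph (T : finType) (e : rel T) : Prop :=
  symmetric e /\ irreflexive e.

Definition proper_coloring (T : finType) (e : rel T) (k : nat) (c : T -> 'I_k) : Prop :=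
  forall x y, e x y -> c x != c y.

Definition colorable (T : finType) (e : rel T) (k : nat) : Prop :=
  exists c : T -> 'I_k, proper_coloring e c.

Definition is_chromatic_number (T : finType) (e : rel T) (k : nat) : Prop :=
  colorable e k /\ (forall k', colorable e k' -> (k <= k')%N).

(* A box in R^k: lo i <= hi i for each coordinate i; the box of v is
   prod_i [lo v i, hi v i].  Two boxes intersect iff in every coordinate the
   closed intervals intersect. *)
Definition boxes_intersect (k : nat) (lo1 hi1 lo2 hi2 : 'I_k -> R) : Prop :=
  forall i, Rle (lo1 i) (hi2 i) /\ Rle (lo2 i) (hi1 i).

Definition box_representation (T : finType) (e : rel T) (k : nat) : Prop :=
  exists lo hi : T -> 'I_k -> R,
    (forall v i, Rle (lo v i) (hi v i)) /\
    (forall x y, x <> y -> (e x y <-> boxes_intersect (lo x) (hi x) (lo y) (hi y))).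

Definition boxicity_le (T : finType) (e : rel T) (k : nat) : Prop :=
  exists k', (k' <= k)%N /\ box_representation e k'.

(* Main.v *)
Require Import Defs.
From mathcomp Require Import all_boot.
From Stdlib Require Import Reals Lra ClassicalEpsilon.

Definition pt (T : finType) (s : seq T) (kk : nat) (v : T) : R :=
  if (index v s < kk)%nat then INR (index v s) else (INR (index v s) - INR (size s))%R.
Definition loI (T : finType) (s : seq T) (kk : nat) (X : T -> {set T}) (u : T) : R :=
  (INR (find (fun w => (kk <= index w s)%nat && (u \in X w)) s) - INR (size s) - /2)%R.
Definition hiI (T : finType) (s : seq T) (kk : nat) (X : T -> {set T}) (u : T) : R :=
  (INR (find (fun w => (kk <= index w s)%nat || (u \notin X w)) s) - /2)%R.

Arguments pt {T}. Arguments loI {T}. Arguments hiI {T}.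
Lemma INR_leq {m n} : (m <= n)%nat -> (INR m <= INR n)%R.
Proof. by move/leP; apply le_INR. Qed.

Lemma INR_ltn {m n} : (m < n)%nat -> (INR m + 1 <= INR n)%R.
Proof. move=> h; have := INR_leq h; rewrite S_INR; lra. Qed.

Lemma lo_le (T : finType) s kk X (u : T) : (loI s kk X u <= - /2)%R.
Proof.
rewrite /loI; have := INR_leq (find_size (fun w => (kk <= index w s)%nat && (u \in X w)) s).
set f := INR (find _ _). set n := INR (size s). lra.
Qed.

Lemma hi_ge (T : finType) s kk X (u : T) : (- /2 <= hiI s kk X u)%R.
Proof. rewrite /hiI; have := pos_INR (find (fun w => (kk <= index w s)%nat || (u \notin X w)) s); lra. Qed.

Lemma key (T : finType) (s : seq T) (kk : nat) (X : T -> {set T}) (u v : T) :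
 uniq s -> v \in s ->
 (forall x y, x \in s -> y \in s -> (index x s <= index y s)%nat -> (index y s < kk)%nat -> X y \subset X x) ->
 (forall x y, x \in s -> y \in s -> (kk <= index x s)%nat -> (index x s <= index y s)%nat -> X x \subset X y) ->
 ((loI s kk X u <= pt s kk v)%R /\ (pt s kk v <= hiI s kk X u)%R) <-> u \in X v.
Proof.
move=> us vs h1 h2.
have jn : (index v s < size s)%nat by rewrite index_mem.
have hlo := lo_le _ s kk X u; have hhi := hi_ge _ s kk X u.
rewrite /pt; case: ifP => jk.
- set P1 := (fun w => (kk <= index w s)%nat || (u \notin X w)).
  have E : (index v s < find P1 s)%nat <-> u \in X v.
    split.
    + move=> lt; have := before_find v lt; rewrite nth_index // /P1.
      by rewrite leqNgt jk /= => /negbFE.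
    + move=> uX; rewrite ltnNge; apply/negP => fj.
      have fs : (find P1 s < size s)%nat by apply: leq_ltn_trans fj jn.
      have hs : has P1 s by rewrite has_find.
      have := nth_find v hs; rewrite {1}/P1.
      set w := nth v s (find P1 s).
      have ws : w \in s by rewrite mem_nth.
      have iw : index w s = find P1 s by rewrite index_uniq.
      rewrite iw; case/orP => [kf | nuX].
      * by move: (leq_ltn_trans (leq_trans kf fj) jk); rewrite ltnn.
      * have sub : X v \subset X w by apply: h1 => //; rewrite iw.
        by move/negP: nuX; apply; apply: (subsetP sub).
  rewrite -E; have := pos_INR (index v s); rewrite /hiI -/P1 => p0.
  split.
  + move=> [_ H]; rewrite ltnNge; apply/negP => fj.
    have := INR_leq fj; lra.
  + move=> lt; have := INR_ltn lt; lra.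
- have kj : (kk <= index v s)%nat by rewrite leqNgt jk.
  set P2 := (fun w => (kk <= index w s)%nat && (u \in X w)).
  have E : (find P2 s <= index v s)%nat <-> u \in X v.
    split.
    + move=> fj.
      have fs : (find P2 s < size s)%nat by apply: leq_ltn_trans fj jn.
      have hs : has P2 s by rewrite has_find.
      have := nth_find v hs; rewrite {1}/P2.
      set w := nth v s (find P2 s).
      have ws : w \in s by rewrite mem_nth.
      have iw : index w s = find P2 s by rewrite index_uniq.
      rewrite iw => /andP [kf uX].
      have sub : X w \subset X v by apply: h2 => //; rewrite iw.
      by apply: (subsetP sub).
    + move=> uX; rewrite leqNgt; apply/negP => lt.
      by have := before_find v lt; rewrite nth_index // /P2 kj uX.
  rewrite -E; have := INR_ltn jn; rewrite /loI -/P2 => p0.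
  split.
  + move=> [H _]; rewrite leqNgt; apply/negP => lt.
    have := INR_ltn lt; lra.
  + move=> fj; have := INR_leq fj; lra.
Qed.

Lemma pt_inj (T : finType) (s : seq T) kk (x y : T) :
  x \in s -> y \in s -> pt s kk x = pt s kk y -> x = y.
Proof.
move=> xs ys.
have xn : (index x s < size s)%nat by rewrite index_mem.
have yn : (index y s < size s)%nat by rewrite index_mem.
have hx := INR_ltn xn; have hy := INR_ltn yn.
have px := pos_INR (index x s); have py := pos_INR (index y s).
rewrite /pt => E; apply: (index_inj x xs ys).
case: ifP E => _; case: ifP => _ E.
- exact: INR_eq.
- set a := INR (index x s) in px hx E; set b := INR (index y s) in py hy E;
  set n := INR (size s) in hx hy E; lra.
- set a := INR (index x s) in px hx E; set b := INR (index y s) in py hy E;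
  set n := INR (size s) in hx hy E; lra.
- apply: INR_eq; set a := INR (index x s) in px hx E |- *; set b := INR (index y s) in py hy E |- *;
  set n := INR (size s) in hx hy E; lra.
Qed.

Theorem theorem3p1 (T : finType) (e : rel T) (chi : nat)
  (c : T -> 'I_chi)          (* colour classes V_i = c^-1(i) *)
  (s : 'I_chi -> seq T)      (* s i = [:: v_{i,1}; ...; v_{i,n(i)}] *)
  (X : T -> {set T}) :       (* X x = X_{i,j} for x = v_{i,j} *)
  simple_graph e ->
  is_chromatic_number e chi ->
  proper_coloring e c ->
  (forall i, uniq (s i)) ->
  (forall i x, (x \in s i) = (c x == i)) ->
  (forall x y, y \in X x -> c y != c x) ->
  (forall x y, e x y -> y \in X x) ->
  (* (i), with 0-based positions: k(i) = kk, 1 <= kk <= n(i) *)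
  (forall i, exists kk, (0 < kk <= size (s i))%N /\
     (forall x y, x \in s i -> y \in s i ->
        (index x (s i) <= index y (s i))%N -> (index y (s i) < kk)%N ->
        X y \subset X x) /\
     (forall x y, x \in s i -> y \in s i ->
        (kk <= index x (s i))%N -> (index x (s i) <= index y (s i))%N ->
        X x \subset X y)) ->
  (* (ii) *)
  (forall x y, x != y -> ~~ e x y -> (x \notin X y) || (y \notin X x)) ->
  boxicity_le e chi.
Proof.
move=> [esym eirr] _ hc us hs hX heX hmono hii.
pose K i := proj1_sig (constructive_indefinite_description _ (hmono i)).
have HK i : _ := proj2_sig (constructive_indefinite_description _ (hmono i)).
pose lo v i := if c v == i then pt (s i) (K i) v else loI (s i) (K i) X v.
pose hi v i := if c v == i then pt (s i) (K i) v else hiI (s i) (K i) X v.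
have hkey : forall i u v, c v = i -> c u != i ->
   ((Rle (lo v i) (hi u i) /\ Rle (lo u i) (hi v i)) <-> u \in X v).
  move=> i u v cv cu; rewrite /lo /hi cv eqxx (negbTE cu).
  have [_ [m1 m2]] := HK i.
  rewrite and_comm; apply: key => //; by rewrite hs cv.
exists chi; split => //; exists lo, hi; split.
- move=> v i; rewrite /lo /hi; case: (c v == i); first lra.
  have := lo_le _ (s i) (K i) X v; have := hi_ge _ (s i) (K i) X v; lra.
- move=> x y xy; case: (eqVneq (c x) (c y)) => cxy.
  + split; first by move/hc; rewrite cxy eqxx.
    move=> /(_ (c x)); rewrite /boxes_intersect /lo /hi eqxx cxy eqxx => -[h1 h2].
    exfalso; apply: xy; apply: (@pt_inj _ (s (c y)) (K (c y))); rewrite ?hs ?cxy //.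
    lra.
  + have A : boxes_intersect (lo x) (hi x) (lo y) (hi y) <-> (y \in X x) && (x \in X y).
      split.
      * move=> H; apply/andP; split.
        - have cyx : c y != c x by rewrite eq_sym.
          exact: (proj1 (hkey (c x) y x erefl cyx) (H (c x))).
        - apply: (proj1 (hkey (c y) x y erefl cxy)).
          by case: (H (c y)) => ? ?; split.
      * move=> /andP [yx xy']; rewrite /boxes_intersect => i.
        case: (eqVneq (c x) i) => ci.
        - have cyi : c y != i by rewrite -ci eq_sym.
          exact: (proj2 (hkey i y x ci cyi)) yx.
        case: (eqVneq (c y) i) => cj.
        - have [a b] := (proj2 (hkey i x y cj ci)) xy'; split; [exact: b | exact: a].
        rewrite /lo /hi (negbTE ci) (negbTE cj).
        have := lo_le _ (s i) (K i) X x; have := hi_ge _ (s i) (K i) X x;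
        have := lo_le _ (s i) (K i) X y; have := hi_ge _ (s i) (K i) X y; lra.
    rewrite A; split.
    * move=> exy; rewrite (heX _ _ exy) (heX y x) //; by rewrite esym.
    * move=> /andP [yx xy']; apply/negPn/negP => ne.
      have xy2 : x != y by apply/eqP.
      by move: (hii x y xy2 ne); rewrite yx xy'.
Qed.
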